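(* Let $\chi:\mathcal H\to\mathcal H_L^\chi\otimes\mathcal H_R^\chi$ be a splitting map and let $\{\pi_i\}_{i\in I}$ be the atomic projectors of $\mathcal Z(\mathrm{stloc}_L(\chi))$. Set $\mathcal H_i=\pi_i\mathcal H$ and $\chi_i=\chi\pi_i:\mathcal H\to\mathcal H_L^\chi\otimes\mathcal H_R^\chi$. Then: (1) $\mathcal H=\bigoplus_i\mathcal H_i$; (2) $\chi=\sum_i\chi_i=\sum_i(\chi_i)|_{\mathcal H_i}$; (3) for every $i$, $(\chi_i)|_{\mathcal H_i}$ is a splitting map on $\mathcal H_i$; (4) its algebra of strictly left-local operators, viewed as a subalgebra of $\mathcal L(\mathcal H)$, equals $\pi_i\,\mathrm{stloc}_L(\chi)$, and is thus a factor; (5) there exists a family $\{\mathcal H_L^i\}_{i\in I}$ of pairwise orthogonal subspaces of $\mathcal H_L^\chi$ such that $\mathrm{Im}(\chi_i)\subseteq\mathcal H_L^i\otimes\mathcal H_R^\chi$ for every $i$.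
   Context: All Hilbert spaces are finite-dimensional and complex. A splitting map on $\mathcal H$ is an isometry $\chi:\mathcal H\to\mathcal H_L^\chi\otimes\mathcal H_R^\chi$. $A\in\mathcal L(\mathcal H)$ is strictly left $\chi$-local if there is $\tilde A\in\mathcal L(\mathcal H_L^\chi)$ with $A\chi^\dagger=\chi^\dagger(\tilde A\otimes\mathbb 1)$ and $\chi A=(\tilde A\otimes\mathbb 1)\chi$; $\mathrm{stloc}_L(\chi)$ is the set of these, a Von Neumann algebra (unital $*$-subalgebra of $\mathcal L(\mathcal H)$). For a Von Neumann algebra $\mathcal C$, $\mathcal Z(\mathcal C)=\mathcal C\cap\mathcal C'$ is its centre; a commutative Von Neumann algebra $\mathcal Z$ has a unique family of nonzero, self-adjoint, pairwise orthogonal projectors ($\pi_i\pi_j=\delta_{ij}\pi_i$) spanning $\mathcal Z$, called its atomic projectors (they sum to the identity). A Von Neumann algebra is a factor if its centre consists of scalar multiples of its identity. Operators on $\mathcal H_i$ are viewed as operators on $\mathcal H$ by extending them by $0$ on $\mathcal H_i^\perp$. *)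

(* Defs.v *)
From HB Require Import structures.
From mathcomp Require Import all_boot all_order all_algebra.
From mathcomp Require Import reals.
From mathcomp Require Export complex mxtens.
Set Implicit Arguments. Unset Strict Implicit. Unset Printing Implicit Defensive.
Import Order.TTheory GRing.Theory Num.Theory.
Local Open Scope ring_scope.

(* Conventions: a finite-dimensional Hilbert space of dimension n is C^n, vectors are
   column vectors 'cV_n, operators H -> K are matrices 'M_(dim K, dim H) acting by
   left multiplication.  H_L (x) H_R is C^(a*b) via the Kronecker product [*t]
   (mxtens).  Subspaces are encoded by their orthogonal projectors; an operator on a
   subspace (range of P) is viewed as an operator on H extended by 0 on the orthogonal
   complement. *)

Definition adj (C : numClosedFieldType) (m n : nat) (A : 'M[C]_(m, n)) : 'M[C]_(n, m) :=
  \matrix_(i, j) (A j i)^*.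

Definition is_orth_proj (C : numClosedFieldType) (n : nat) (P : 'M[C]_n) : Prop :=
  P *m P = P /\ adj P = P.

(* chi is a splitting map on the subspace H' = range P (P an orthogonal projector on H):
   chi restricted to H' is an isometry H' -> H_L (x) H_R, and chi is extended by 0 on
   the orthogonal complement of H'. *)
Definition splitting_on (C : numClosedFieldType) (n a b : nat)
    (P : 'M[C]_n) (chi : 'M[C]_(a * b, n)) : Prop :=
  is_orth_proj P /\ adj chi *m chi = P /\ chi *m P = chi.

Definition splitting (C : numClosedFieldType) (n a b : nat) (chi : 'M[C]_(a * b, n)) :=
  splitting_on 1%:M chi.

Definition stlocL_on (C : numClosedFieldType) (n a b : nat)
    (P : 'M[C]_n) (chi : 'M[C]_(a * b, n)) (A : 'M[C]_n) : Prop :=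
  P *m A *m P = A /\
  exists At : 'M[C]_a,
    A *m adj chi = adj chi *m (At *t (1%:M : 'M[C]_b)) /\
    chi *m A = (At *t (1%:M : 'M[C]_b)) *m chi.

Definition stlocL (C : numClosedFieldType) (n a b : nat) (chi : 'M[C]_(a * b, n)) :=
  stlocL_on 1%:M chi.

Definition centre (C : numClosedFieldType) (n : nat) (S : 'M[C]_n -> Prop) (Z : 'M[C]_n) : Prop :=
  S Z /\ forall A, S A -> A *m Z = Z *m A.

Definition is_factor (C : numClosedFieldType) (n : nat) (P : 'M[C]_n) (S : 'M[C]_n -> Prop) : Prop :=
  forall Z, centre S Z -> exists c : C, Z = c *: P.

Definition atomic_projectors (C : numClosedFieldType) (n : nat) (I : finType)
    (Zc : 'M[C]_n -> Prop) (pi : I -> 'M[C]_n) : Prop :=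
  [/\ forall i, pi i != 0,
      forall i, adj (pi i) = pi i,
      forall i j, pi i *m pi j = (if i == j then pi i else 0)
    & forall A, Zc A <-> exists c : I -> C, A = \sum_i c i *: pi i].

(* Main.v *)
Require Import Defs.
From HB Require Import structures.
From mathcomp Require Import all_boot all_order all_algebra.
From mathcomp Require Import reals.
From mathcomp Require Import complex mxtens.
Import Order.TTheory GRing.Theory Num.Theory.
Local Open Scope ring_scope.

Section Helpers.
Variable C : numClosedFieldType.

Lemma adjK m n (A : 'M[C]_(m, n)) : adj (adj A) = A.
Proof. by apply/matrixP => i j; rewrite !mxE conjCK. Qed.

Lemma adjM m n p (A : 'M[C]_(m, n)) (B : 'M[C]_(n, p)) :
  adj (A *m B) = adj B *m adj A.
Proof.
apply/matrixP => i j; rewrite !mxE rmorph_sum; apply: eq_bigr => k _.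
by rewrite !mxE rmorphM mulrC.
Qed.

Lemma adj1 m : adj (1%:M : 'M[C]_m) = 1%:M.
Proof. by apply/matrixP => i j; rewrite !mxE rmorph_nat eq_sym. Qed.

Lemma adj0 m n : adj (0 : 'M[C]_(m, n)) = 0.
Proof. by apply/matrixP => i j; rewrite !mxE conjC0. Qed.

Lemma adj_tens m n p q (A : 'M[C]_(m, n)) (B : 'M[C]_(p, q)) :
  adj (A *t B) = adj A *t adj B.
Proof. by apply/matrixP => i j; rewrite !mxE rmorphM. Qed.

Lemma adj_trC m n (A : 'M[C]_(m, n)) : map_mx Num.Def.conjC (A^T) = adj A.
Proof. by apply/matrixP => i j; rewrite !mxE. Qed.

Lemma tensT1 a b (X Y : 'M[C]_a) :
  (X *t (1%:M : 'M[C]_b)) *m (Y *t (1%:M : 'M[C]_b)) = (X *m Y) *t 1%:M.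
Proof. by rewrite tensmx_mul mulmx1. Qed.

Lemma tens11 a b : (1%:M : 'M[C]_a) *t (1%:M : 'M[C]_b) = 1%:M.
Proof.
apply/matrixP => k l.
case: (mxtens_indexP k) => i r; case: (mxtens_indexP l) => j s.
rewrite tensmxE !mxE (can_eq (@mxtens_indexK _ _)) xpair_eqE.
by case: (i == j); case: (r == s); rewrite /= ?mulr1 ?mulr0 ?mul0r.
Qed.

Definition Er a {b} (r : 'I_b) : 'M[C]_(a, a * b) :=
  \matrix_(i, k) ((k == mxtens_index (i, r))%:R).

Lemma Er_mul a b p (r : 'I_b) (v : 'M[C]_(a * b, p)) i x :
  (Er a r *m v) i x = v (mxtens_index (i, r)) x.
Proof.
rewrite !mxE (bigD1 (mxtens_index (i, r))) //= big1 ?addr0.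
  by rewrite !mxE eqxx mul1r.
by move=> k /negbTE nk; rewrite !mxE nk mul0r.
Qed.

Lemma Er_inj a b p (v w : 'M[C]_(a * b, p)) :
  (forall r : 'I_b, Er a r *m v = Er a r *m w) -> v = w.
Proof.
move=> h; apply/matrixP => k x; case: (mxtens_indexP k) => i r.
by rewrite -!Er_mul h.
Qed.

Lemma ErT a b (r : 'I_b) (X : 'M[C]_a) :
  Er a r *m (X *t (1%:M : 'M[C]_b)) = X *m Er a r.
Proof.
apply/matrixP => i k; rewrite Er_mul.
case: (mxtens_indexP k) => j s; rewrite tensmxE !mxE.
rewrite (bigD1 j) //= big1 ?addr0.
  rewrite !mxE (can_eq (@mxtens_indexK _ _)) xpair_eqE eqxx /= eq_sym.
  by case: (r == s); rewrite ?mulr1 ?mulr0.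
move=> l /negbTE nl; rewrite !mxE (can_eq (@mxtens_indexK _ _)) xpair_eqE eq_sym nl /=.
by rewrite mulr0.
Qed.

Lemma TEr a b (r : 'I_b) (X : 'M[C]_a) :
  (X *t (1%:M : 'M[C]_b)) *m adj (Er a r) = adj (Er a r) *m X.
Proof.
have := congr1 (@adj C _ _) (ErT a b r (adj X)).
by rewrite !adjM adj_tens adj1 !adjK.
Qed.


Lemma part4_fwd n a b (chi : 'M[C]_(a * b, n)) (p : 'M[C]_n) (Q : 'M[C]_a)
  (pp : p *m p = p) (psa : adj p = p)
  (hQ1 : p *m adj chi = adj chi *m (Q *t (1%:M : 'M[C]_b)))
  (hQ2 : chi *m p = (Q *t (1%:M : 'M[C]_b)) *m chi) A :
  stlocL_on p (chi *m p) A -> stlocL chi A /\ A = p *m A.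
Proof.
move=> [hA [At [h1 h2]]].
have pA : p *m A = A by rewrite -[in RHS]hA -[in LHS]hA !mulmxA pp.
have Ap : A *m p = A by rewrite -[in LHS]hA -mulmxA pp hA.
split; last by rewrite pA.
split; first by rewrite mulmx1 mul1mx.
exists (Q *m At *m Q); split.
- rewrite -!tensT1 !mulmxA -hQ1.
  rewrite adjM psa in h1.
  rewrite -h1 -mulmxA -(mulmxA p) -hQ1 !mulmxA !Ap //.
- rewrite -!tensT1 -!mulmxA -hQ2 -h2 !mulmxA -hQ2 -(mulmxA chi p p) pp -mulmxA pA //.
Qed.

Lemma part4_bwd n a b (chi : 'M[C]_(a * b, n)) (p : 'M[C]_n)
  (pp : p *m p = p) (psa : adj p = p)
  (hcomm : forall B, stlocL chi B -> B *m p = p *m B) B :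
  stlocL chi B -> stlocL_on p (chi *m p) (p *m B).
Proof.
move=> hB; have [_ [Bt [h1 h2]]] := hB.
split.
  by rewrite !mulmxA pp -mulmxA (hcomm B hB) mulmxA pp.
exists Bt; split.
- rewrite adjM psa mulmxA -(mulmxA p B p) (hcomm B hB) mulmxA pp -mulmxA h1 mulmxA //.
- rewrite mulmxA -(mulmxA chi p p) pp -mulmxA -(hcomm B hB) mulmxA h2 -mulmxA //.
Qed.


Section Part5.
Variables (n a b : nat).

Definition Vsp (w : 'M[C]_(a * b, n)) : 'M[C]_a :=
  (\sum_(r < b) <<adj (Er a r *m w)>>)%MS.
Definition Usp (w : 'M[C]_(a * b, n)) := schmidt (row_base (Vsp w)).
Definition QLd (w : 'M[C]_(a * b, n)) := adj (Usp w) *m Usp w.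

Lemma Usp_unit w : Usp w *m adj (Usp w) = 1%:M.
Proof.
rewrite -adj_trC; apply/spectral.unitarymxP.
by apply: schmidt_unitarymx; rewrite rank_leq_col.
Qed.

Lemma Usp_eq w : (Usp w :=: Vsp w)%MS.
Proof.
apply: eqmx_trans (eq_row_base _).
by apply: eqmx_schmidt_free; apply: row_base_free.
Qed.

Lemma QLd_adj w : adj (QLd w) = QLd w.
Proof. by rewrite /QLd adjM adjK. Qed.

Lemma QLd_proj w : is_orth_proj (QLd w).
Proof.
split; last exact: QLd_adj.
by rewrite /QLd mulmxA -(mulmxA _ (Usp w)) Usp_unit mulmx1.
Qed.

Lemma QLd_fix w : (QLd w *t (1%:M : 'M[C]_b)) *m w = w.
Proof.
apply: Er_inj => r; rewrite mulmxA ErT -mulmxA.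
suff h : adj (Er a r *m w) *m QLd w = adj (Er a r *m w).
  by have := congr1 (@adj C _ _) h; rewrite adjM QLd_adj !adjK.
have : (adj (Er a r *m w) <= Usp w)%MS.
  rewrite Usp_eq; apply: (sumsmx_sup r) => //; by rewrite genmxE.
move=> /submxP [D ->].
by rewrite /QLd mulmxA -(mulmxA D) Usp_unit mulmx1.
Qed.

Lemma QLd_orth w1 w2 :
  (forall r s : 'I_b, adj (Er a s *m w2) *m (Er a r *m w1) = 0) ->
  QLd w1 *m QLd w2 = 0.
Proof.
move=> h.
suff h12 : Usp w1 *m adj (Usp w2) = 0.
  by rewrite /QLd mulmxA -(mulmxA _ (Usp w1)) h12 mulmx0 mul0mx.
apply/eqP; rewrite -sub_kermx Usp_eq; apply/sumsmx_subP => r _.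
rewrite genmxE sub_kermx -adjM.
suff -> : Usp w2 *m (Er a r *m w1) = 0 by rewrite adj0.
apply/eqP; rewrite -sub_kermx Usp_eq; apply/sumsmx_subP => s _.
by rewrite genmxE sub_kermx h.
Qed.

End Part5.


Theorem main_gen (n a b : nat) (chi : 'M[C]_(a * b, n))
    (I : finType) (pi : I -> 'M[C]_n) :
  splitting chi ->
  atomic_projectors (centre (stlocL chi)) pi ->
  let chi_ := fun i => chi *m pi i in
  [/\ \sum_i pi i = 1%:M,
      chi = \sum_i chi_ i /\ chi = \sum_i chi_ i *m pi i,
      forall i, splitting_on (pi i) (chi_ i *m pi i),
      forall i,
        (forall A, stlocL_on (pi i) (chi_ i *m pi i) A <->
                   exists B, stlocL chi B /\ A = pi i *m B) /\
        is_factor (pi i) (stlocL_on (pi i) (chi_ i *m pi i))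
    & exists QL : I -> 'M[C]_a,
        [/\ forall i, is_orth_proj (QL i),
            forall i j, i != j -> QL i *m QL j = 0
          & forall i, (QL i *t (1%:M : 'M[C]_b)) *m chi_ i = chi_ i]].
Proof.
move=> [_ [hiso _]] [pnz psa porth hZ] chi_; rewrite /chi_ {chi_}.
have pp : forall i, pi i *m pi i = pi i by move=> i; rewrite porth eqxx.
have pq : forall i j, i != j -> pi i *m pi j = 0.
  by move=> i j /negbTE h; rewrite porth h.
have Zpi : forall i, centre (stlocL chi) (pi i).
  move=> i; apply/hZ; exists (fun j => (j == i)%:R).
  rewrite (bigD1 i) //= big1 ?addr0 ?eqxx ?scale1r //.
  by move=> j /negbTE ->; rewrite scale0r.
have Z1 : centre (stlocL chi) 1%:M.
  split; last by move=> A _; rewrite mul1mx mulmx1.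
  split; first by rewrite !mul1mx.
  by exists 1%:M; rewrite tens11 !mul1mx !mulmx1.
have sum1 : \sum_i pi i = 1%:M.
  have [c hc] := (hZ _).1 Z1.
  have cj : forall j, c j = 1.
    move=> j; have := congr1 (mulmx (pi j)) hc.
    rewrite mulmx1 mulmx_sumr (bigD1 j) //= big1 ?addr0; last first.
      by move=> k nk; rewrite -scalemxAr porth eq_sym (negbTE nk) scaler0.
    rewrite -scalemxAr pp => /eqP.
    rewrite -subr_eq0 -{1}[pi j]scale1r -scalerBl scaler_eq0 (negbTE (pnz j)) orbF.
    by rewrite subr_eq0 => /eqP h; rewrite -h.
  by rewrite [RHS]hc; apply: eq_bigr => i _; rewrite cj scale1r.
have hQ : forall i, exists Q : 'M[C]_a,
    pi i *m adj chi = adj chi *m (Q *t (1%:M : 'M[C]_b)) /\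
    chi *m pi i = (Q *t (1%:M : 'M[C]_b)) *m chi.
  by move=> i; have [[_ hQ] _] := Zpi i.
have hcomm : forall i B, stlocL chi B -> B *m pi i = pi i *m B.
  by move=> i B hB; apply: (Zpi i).2.
split.
- exact: sum1.
- split; first by rewrite -mulmx_sumr sum1 mulmx1.
  under eq_bigr => i _ do rewrite -mulmxA pp.
  by rewrite -mulmx_sumr sum1 mulmx1.
- move=> i; rewrite -mulmxA pp.
  split; first by split; [exact: pp | exact: psa].
  split; last by rewrite -mulmxA pp.
  by rewrite adjM psa mulmxA -(mulmxA (pi i)) hiso mulmx1 pp.
- move=> i; rewrite -mulmxA pp.
  have [Q [hQ1 hQ2]] := hQ i.
  have fwd := @part4_fwd n a b chi (pi i) Q (pp i) (psa i) hQ1 hQ2.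
  have bwd := @part4_bwd n a b chi (pi i) (pp i) (psa i) (hcomm i).
  have iff : forall A, stlocL_on (pi i) (chi *m pi i) A <->
                   exists B, stlocL chi B /\ A = pi i *m B.
    move=> A; split.
      by move=> hA; exists A; exact: fwd.
    by move=> [B [hB ->]]; exact: bwd.
  split; first exact: iff.
  move=> Z [hZi hZc].
  have [hZs eZ] := fwd Z hZi.
  have Zp : Z *m pi i = Z.
    by have [hA _] := hZi; rewrite -[in LHS]hA -mulmxA pp hA.
  have : centre (stlocL chi) Z.
    split=> // B hB.
    have hpB := bwd B hB.
    have h := hZc _ hpB.
    by rewrite {1}eZ mulmxA (hcomm i B hB) h mulmxA Zp.
  move=> /hZ [c hc]; exists (c i).
  rewrite eZ hc mulmx_sumr (bigD1 i) //= big1 ?addr0.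
    by rewrite -scalemxAr pp.
  by move=> k nk; rewrite -scalemxAr porth eq_sym (negbTE nk) scaler0.
- exists (fun i => QLd n a b (chi *m pi i)); split.
  + by move=> i; exact: QLd_proj.
  + move=> i j nij; apply: QLd_orth => r s.
    have [Q [hQ1 hQ2]] := hQ j.
    have e1 : adj (chi *m pi j) = adj (chi *m pi j) *m (Q *t (1%:M : 'M[C]_b)).
      by rewrite adjM psa -mulmxA -hQ1 mulmxA pp.
    have e2 : (Q *t (1%:M : 'M[C]_b)) *m (chi *m pi i) = 0.
      have nji : j != i by rewrite eq_sym.
      by rewrite mulmxA -hQ2 -mulmxA (pq j i nji) mulmx0.
    rewrite (@adjM _ _ _ (Er a s) (chi *m pi j)) e1 -!mulmxA (mulmxA (Q *t 1%:M)) TEr -mulmxA.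
    by rewrite (mulmxA Q) -ErT -mulmxA e2 !mulmx0.
  + by move=> i; exact: QLd_fix.
Qed.

End Helpers.

Theorem mainTheorem12 (R : realType) (n a b : nat) (chi : 'M[R[i]]_(a * b, n))
    (I : finType) (pi : I -> 'M[R[i]]_n) :
  splitting chi ->
  atomic_projectors (centre (stlocL chi)) pi ->
  let chi_ := fun i => chi *m pi i in
  [/\ \sum_i pi i = 1%:M,
      chi = \sum_i chi_ i /\ chi = \sum_i chi_ i *m pi i,
      forall i, splitting_on (pi i) (chi_ i *m pi i),
      forall i,
        (forall A, stlocL_on (pi i) (chi_ i *m pi i) A <->
                   exists B, stlocL chi B /\ A = pi i *m B) /\
        is_factor (pi i) (stlocL_on (pi i) (chi_ i *m pi i))
    & exists QL : I -> 'M[R[i]]_a,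
        [/\ forall i, is_orth_proj (QL i),
            forall i j, i != j -> QL i *m QL j = 0
          & forall i, (QL i *t (1%:M : 'M[R[i]]_b)) *m chi_ i = chi_ i]].
Proof.
exact: (@main_gen (R[i]) n a b chi I pi).
Qed.
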